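(* Let $\varphi(x)=\sum_{i\ge0}\gamma_i x^i\in\mathbb{C}[[x]]$. Then $\varphi(x)$ is symplectic if and only if for every $n\ge0$, $$\gamma_{2n+1}=\sum_i {n \brack i}\gamma_{2i}.$$ In particular, for every choice of $\gamma_0,\gamma_2,\gamma_4,\dots\in\mathbb{C}$ there is a unique symplectic power series with these even coefficients, determined by this rule.
   Context: A formal power series $\varphi(x)=\sum_{i\ge0}\gamma_i x^i$ is called symplectic if for every $m\ge1$ one has $\sum_{k=0}^{m-1}(-1)^k\binom{m-1}{k}\gamma_{m+k}=0$. The Euler polynomials $E_n(x)$ are defined by $\frac{2e^{xt}}{e^t+1}=\sum_{n\ge0}E_n(x)\frac{t^n}{n!}$. For $n\ge0$ the integers ${n\brack i}$ are defined by $x\big(x^{2n}-E_{2n}(x)\big)=\sum_i {n\brack i}x^{2i}$ (the polynomial $x^{2n}-E_{2n}(x)$ contains only odd powers of $x$); in particular ${n\brack i}=0$ for $i\le0$ or $i>n$. *)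

(* Defs.v *)
From HB Require Import structures.
From mathcomp Require Import all_boot all_order all_algebra.
From mathcomp Require Import complex.
From mathcomp Require Import reals.
Set Implicit Arguments. Unset Strict Implicit. Unset Printing Implicit Defensive.
Import Order.TTheory GRing.Theory Num.Theory.
Local Open Scope ring_scope.

(* A formal power series \sum_i gamma_i x^i is represented by its
   coefficient sequence gamma : nat -> F. *)
Definition symplectic (F : pzRingType) (gamma : nat -> F) : Prop :=
  forall m : nat, (1 <= m)%N ->
    \sum_(k < m) (-1) ^+ k * ('C(m.-1, k))%:R * gamma (m + k)%N = 0.

(* Comparing the coefficients of t^n/n! in
   2 e^{xt} = (e^t + 1) * \sum_n E_n(x) t^n/n!  gives
   2 x^n = E_n(x) + \sum_{k<=n} C(n,k) E_k(x), i.e.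
   E_n(x) = x^n - 1/2 \sum_{k<n} C(n,k) E_k(x).
   euler_upto n = [:: E_0; ...; E_n]. *)
Fixpoint euler_upto (n : nat) : seq {poly rat} :=
  match n with
  | 0 => [:: 1]
  | n'.+1 =>
      let s := euler_upto n' in
      rcons s ('X ^+ n'.+1 - 2%:R^-1 *: \sum_(k < n'.+1) ('C(n'.+1, k))%:R *: s`_k)
  end.

Definition euler_poly (n : nat) : {poly rat} := (euler_upto n)`_n.

Definition ebrack (n i : nat) : rat :=
  ('X * ('X ^+ (2 * n) - euler_poly (2 * n)))`_(2 * i).

(* Main.v *)
Require Import Defs.
From HB Require Import structures.
From mathcomp Require Import all_boot all_order all_algebra.
From mathcomp Require Import complex.
From mathcomp Require Import reals.
From mathcomp Require Import ring lra zify.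
Set Implicit Arguments. Unset Strict Implicit. Unset Printing Implicit Defensive.
Import Order.TTheory GRing.Theory Num.Theory.
Local Open Scope ring_scope.

Local Notation E := euler_poly.

Lemma size_euler_upto n : size (euler_upto n) = n.+1.
Proof. by elim: n => //= n IH; rewrite size_rcons IH. Qed.

Lemma euler_upto_nth n k : (k <= n)%N -> (euler_upto n)`_k = E k.
Proof.
elim: n k => [|n IH] k.
  by rewrite leqn0 => /eqP->.
rewrite leq_eqVlt => /orP[/eqP->//|]; rewrite ltnS => hk.
by rewrite /= nth_rcons size_euler_upto ltnS hk IH.
Qed.

Lemma E_rec n : E n = 'X^n - 2%:R^-1 *: \sum_(k < n) ('C(n, k))%:R *: E k.
Proof.
case: n => [|n]; first by rewrite big_ord0 scaler0 subr0 expr0.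
rewrite {1}/euler_poly /= nth_rcons size_euler_upto ltnn eqxx.
congr (_ - _ *: _); apply: eq_bigr => k _; rewrite euler_upto_nth //.
by rewrite -ltnS.
Qed.

Lemma E0 : E 0 = 1.
Proof. by []. Qed.

Lemma E_deriv n : (E n.+1)^`() = E n *+ n.+1.
Proof.
elim: n {-2}n (leqnn n) => [|N IH] n hn.
  move: hn; rewrite leqn0 => /eqP ->.
  rewrite E_rec big_ord1 bin0 scale1r /= E0 derivB derivZ derivC scaler0 subr0.
  by rewrite derivXn /=.
rewrite [E n.+1]E_rec derivB derivZ derivXn /= raddf_sum /=.
rewrite big_ord_recl /=.
rewrite derivZ E0 derivC scaler0 add0r [E n]E_rec mulrnBl; congr (_ - _).
rewrite scalerMnr; congr (_ *: _); rewrite -sumrMnl; apply: eq_bigr => j _.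
have hj : (j <= N)%N by move: (ltn_ord j) hn; rewrite /bump /=; lia.
rewrite /bump /= add1n derivZ IH // -!scaler_nat !scalerA -!natrM.
by rewrite mulnC -mul_bin_diag mulnC.
Qed.

Lemma sizeQ n : (size ('X^n - E n)%R <= n)%N.
Proof.
elim: n {-2}n (leqnn n) => [|N IH] n hn.
  by move: hn; rewrite leqn0 => /eqP ->; rewrite E0 expr0 subrr size_poly0.
rewrite [E n]E_rec opprB addrC subrK.
rewrite (leq_trans (size_scale_leq _ _)) // (leq_trans (size_sum _ _ _)) //.
apply/bigmax_leqP => k _; rewrite (leq_trans (size_scale_leq _ _)) //.
have hk : (k <= N)%N by move: (ltn_ord k) hn; lia.
have -> : E k = 'X^k - ('X^k - E k) by rewrite opprB addrC subrK.
rewrite (leq_trans (size_polyD _ _)) // size_polyN size_polyXn geq_max.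
by rewrite ltn_ord /= (leq_trans (IH _ hk)) // ltnW.
Qed.

Lemma size_E n : (size (E n) <= n.+1)%N.
Proof.
have -> : E n = 'X^n - ('X^n - E n) by rewrite opprB addrC subrK.
rewrite (leq_trans (size_polyD _ _)) // size_polyN size_polyXn geq_max leqnn.
by rewrite (leq_trans (sizeQ n)).
Qed.

Lemma E_derivn n i : (i <= n)%N -> (E n)^`(i) = E (n - i) *+ n ^_ i.
Proof.
elim: i => [|i IH] hi; first by rewrite derivn0 subn0 ffactn0.
rewrite derivnS IH ?(ltnW hi) // derivMn.
have -> : (n - i = (n - i.+1).+1)%N by lia.
by rewrite E_deriv -mulrnA ffactnSr mulnC; congr (_ *+ (_ * _)); lia.
Qed.

Lemma mulrn_inj (p q : {poly rat}) k : (0 < k)%N -> p *+ k = q *+ k -> p = q.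
Proof.
move=> hk /(congr1 (fun r => (k%:R)^-1 *: r)); rewrite -!scaler_nat !scalerA.
rewrite mulVf ?scale1r //; by rewrite pnatr_eq0 -lt0n.
Qed.

Lemma E_nderivn n i : (i <= n)%N -> (E n)^`N(i) = 'C(n, i)%:R *: E (n - i).
Proof.
move=> hi; apply: (@mulrn_inj _ _ i`!); first exact: fact_gt0.
rewrite -nderivn_def E_derivn // -bin_ffact scaler_nat mulrnA //.
Qed.

Lemma taylor1 (p : {poly rat}) N : (size p <= N)%N ->
  p \Po ('X + 1) = \sum_(i < N) p^`N(i).
Proof.
move=> hN; rewrite /comp_poly (@nderiv_taylor_wide _ N _ _ _ (commr1 'X)) ?size_map_polyC //.
apply: eq_bigr => i _; rewrite expr1n mulr1 nderivn_map.
by rewrite -/(comp_poly 'X _) comp_polyXr.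
Qed.

Lemma E_shift_sum n : E n \Po ('X + 1) = \sum_(k < n.+1) 'C(n, k)%:R *: E k.
Proof.
rewrite (taylor1 (size_E n)) (reindex_inj rev_ord_inj) /=.
apply: eq_bigr => i _; rewrite E_nderivn; last by rewrite subSS leq_subr.
have hi : (i <= n)%N by rewrite -ltnS.
by rewrite subSS subKn // bin_sub.
Qed.


Lemma E_shift n : E n \Po ('X + 1) + E n = 'X^n *+ 2.
Proof.
rewrite E_shift_sum big_ord_recr /= binn scale1r.
have hE := E_rec n; set S := \sum_(k < n) _ in hE *.
have -> : S = 2%:R *: ('X^n - E n).
  rewrite hE opprB addrC subrK scalerA mulfV ?scale1r //.
by rewrite scalerBr -addrA -mulr2n -!scaler_nat subrK.
Qed.

Lemma sgnK n : ((-1 : rat) ^+ n) * ((-1) ^+ n) = 1.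
Proof. by rewrite -exprMn mulrNN mulr1 expr1n. Qed.

Lemma comp1X_X1 : (1 - 'X) \Po ('X + 1) = - 'X :> {poly rat}.
Proof. rewrite comp_polyB comp_polyX -polyC1 comp_polyC polyC1; ring. Qed.

Lemma compX1_NX : ('X + 1) \Po (- 'X) = 1 - 'X :> {poly rat}.
Proof. rewrite comp_polyD comp_polyX -polyC1 comp_polyC polyC1; ring. Qed.

Lemma deriv0_taylor (D : {poly rat}) : D^`() = 0 -> D \Po ('X + 1) = D.
Proof.
move=> hD; rewrite (@taylor1 _ (size D).+1) // big_ord_recl nderivn0.
rewrite big1 ?addr0 // => i _.
apply: (@mulrn_inj _ _ (bump 0 i)`!); first exact: fact_gt0.
by rewrite -nderivn_def mul0rn /= add0n -derivnS derivSn hD derivn_poly0 // size_poly0.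
Qed.

Lemma E_sym n : E n \Po (1 - 'X) = (-1) ^+ n *: E n.
Proof.
elim: n {-2}n (leqnn n) => [|N IH] n hn.
  by move: hn; rewrite leqn0 => /eqP ->; rewrite E0 -polyC1 comp_polyC expr0 scale1r.
set H := (-1) ^+ n *: (E n \Po (1 - 'X)).
suff hD : E n - H = 0.
  move/eqP: hD; rewrite subr_eq0 => /eqP hE.
  by rewrite {2}hE /H scalerA sgnK scale1r.
have hsH : H \Po ('X + 1) + H = 'X^n *+ 2.
  rewrite /H comp_polyZ -comp_polyA comp1X_X1.
  rewrite [E n \Po (1 - 'X)](_ : _ = (E n \Po ('X + 1)) \Po (- 'X)); last first.
    by rewrite -comp_polyA compX1_NX.
  rewrite -scalerDr -comp_polyD addrC E_shift.
  rewrite -scaler_nat comp_polyZ comp_Xn_poly -scaleN1r exprZn.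
  by rewrite !scalerA mulrAC sgnK mul1r scaler_nat.
have hDd : (E n - H)^`() = 0.
  case: n hn @H hsH => [|m] hm H hsH.
    by rewrite /H E0 -polyC1 comp_polyC expr0 scale1r subrr deriv0.
  rewrite derivB /H derivZ deriv_comp E_deriv derivB derivX -polyC1 derivC.
  rewrite sub0r mulrN1 rmorphMn /= IH // -scaler_nat -!scaleN1r !scalerA.
  rewrite -scaler_nat !scalerA -scalerDl; apply/eqP; rewrite scaler_eq0; apply/orP; left.
  rewrite exprS; have hs := sgnK m; set s := (-1)^+m in hs *.
  apply/eqP; transitivity (m.+1%:R * (1 - s * s)); first ring.
  by rewrite hs subrr mulr0.
have hT := deriv0_taylor hDd; rewrite comp_polyB in hT.
have : (E n - H) *+ 2 = (E n \Po ('X+1) + E n) - (H \Po ('X+1) + H).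
  by rewrite mulr2n -{1}hT; ring.
rewrite E_shift hsH subrr => h2; apply: (@mulrn_inj _ _ 2) => //.
by rewrite h2 mul0rn.
Qed.

Lemma sgn_even (Rg : pzRingType) n : (-1 : Rg) ^+ (2 * n) = 1.
Proof. by rewrite exprM expr2 mulrNN mulr1 expr1n. Qed.

Lemma even_comp (p : {poly rat}) : p \Po (- 'X) = p -> p = even_poly p \Po 'X^2.
Proof.
move=> hp.
have hX2 : 'X^2 \Po (- 'X) = 'X^2 :> {poly rat} by rewrite comp_Xn_poly sqrrN.
have hd := poly_even_odd p.
have h1 : p \Po (- 'X) = even_poly p \Po 'X^2 - (odd_poly p \Po 'X^2) * 'X.
  by rewrite -{1}hd comp_polyD comp_polyM -!comp_polyA hX2 comp_polyX mulrN.
set e := even_poly p \Po 'X^2 in hd h1 *.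
set o := odd_poly p \Po 'X^2 in hd h1 *.
have h2 : (o * 'X) *+ 2 = 0 *+ 2.
  rewrite mul0rn.
  transitivity (p - (p \Po (- 'X))); last by rewrite hp subrr.
  rewrite h1 -[in RHS]hd; ring.
by rewrite -[LHS]hd (mulrn_inj (isT : (0 < 2)%N) h2) addr0.
Qed.

Lemma odd_comp (p : {poly rat}) : p \Po (- 'X) = - p -> p = (odd_poly p \Po 'X^2) * 'X.
Proof.
move=> hp.
have hX2 : 'X^2 \Po (- 'X) = 'X^2 :> {poly rat} by rewrite comp_Xn_poly sqrrN.
have hd := poly_even_odd p.
have h1 : p \Po (- 'X) = even_poly p \Po 'X^2 - (odd_poly p \Po 'X^2) * 'X.
  by rewrite -{1}hd comp_polyD comp_polyM -!comp_polyA hX2 comp_polyX mulrN.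
set e := even_poly p \Po 'X^2 in hd h1 *.
set o := odd_poly p \Po 'X^2 in hd h1 *.
have h2 : e *+ 2 = 0 *+ 2.
  rewrite mul0rn.
  transitivity (p + (p \Po (- 'X))); last by rewrite hp subrr.
  rewrite h1 -[in RHS]hd; ring.
by rewrite -[LHS]hd (mulrn_inj (isT : (0 < 2)%N) h2) add0r.
Qed.

Lemma E_negX n : E (2 * n) \Po (- 'X) = 'X^(2 * n) *+ 2 - E (2 * n).
Proof.
rewrite -comp1X_X1 comp_polyA E_sym sgn_even scale1r.
by rewrite -(E_shift (2 * n)) addrK.
Qed.

Lemma Q_odd n : ('X^(2 * n) - E (2 * n)) \Po (- 'X) = - ('X^(2 * n) - E (2 * n)).
Proof.
rewrite comp_polyB E_negX comp_Xn_poly -scaleN1r exprZn sgn_even scale1r; ring.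
Qed.

Lemma size_E_eq n : size (E n) = n.+1.
Proof.
have -> : E n = 'X^n + - ('X^n - E n) by rewrite opprB addrC subrK.
by rewrite size_polyDl size_polyXn // size_polyN ltnS sizeQ.
Qed.

Definition uX : {poly rat} := 'X - 'X^2.

Lemma size_uX : size uX = 3.
Proof. by rewrite /uX addrC size_polyDl size_polyN size_polyXn // size_polyX. Qed.

Lemma E_u n : exists f, E (2 * n) = f \Po uX /\ size f = n.+1.
Proof.
set c : rat := 2%:R^-1.
have hc : c%:P + c%:P = 1 :> {poly rat}.
  by rewrite -polyCD -polyC1; congr (_%:P); rewrite /c; field.
set Eh := E (2 * n) \Po ('X + c%:P).
have hEh : Eh \Po (- 'X) = Eh.
  have h1 : ('X + c%:P) \Po (- 'X) = (1 - 'X) \Po ('X + c%:P).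
    rewrite comp_polyD comp_polyB !comp_polyX comp_polyC -polyC1 comp_polyC polyC1.
    rewrite -hc; ring.
  by rewrite /Eh -comp_polyA h1 comp_polyA E_sym sgn_even scale1r.
have hEv := even_comp hEh.
set e := even_poly Eh in hEv.
set f := e \Po ((c * c)%:P - 'X).
have hE : E (2 * n) = f \Po uX.
  rewrite /f -comp_polyA.
  have -> : ((c * c)%:P - 'X) \Po uX = 'X^2 \Po ('X - c%:P).
    rewrite comp_polyB comp_polyC comp_polyX comp_Xn_poly /uX polyCM.
    have -> : ('X - c%:P)^+2 = 'X^2 - (c%:P + c%:P) * 'X + c%:P * c%:P by ring.
    rewrite hc mul1r; ring.
  by rewrite comp_polyA -hEv comp_polyXaddC_K.
exists f; split => //.
have hs := size_comp_poly f uX; rewrite -hE size_E_eq size_uX in hs.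
have hf : f != 0.
  apply/eqP => hf0; move: hE; rewrite hf0 comp_poly0 => /eqP.
  by rewrite -size_poly_eq0 size_E_eq.
have hs2 : (2 * n = (size f).-1 * 2)%N by rewrite -[LHS]/((2 * n).+1.-1) hs.
have hp : (0 < size f)%N by rewrite size_poly_gt0.
move: hp hs2; case: (size f) => [|s] //= _; lia.
Qed.

Section LSec.
Variable R : realType.
Variable gamma : nat -> R[i].

Definition Lb N (p : {poly rat}) : R[i] := \sum_(j < N) ratr p`_j * gamma j.
Definition L (p : {poly rat}) := Lb (size p) p.

Lemma Lb_wid (p : {poly rat}) N M : (size p <= N)%N -> (N <= M)%N -> Lb N p = Lb M p.
Proof.
move=> hp hNM; rewrite /Lb (big_ord_widen _ (fun j => ratr p`_j * gamma j) hNM) big_mkcond /=.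
apply: eq_bigr => j _; case: ifP => // /negbT; rewrite -leqNgt => hj.
by rewrite nth_default ?rmorph0 ?mul0r // (leq_trans hp).
Qed.

Lemma L_Lb (p : {poly rat}) N : (size p <= N)%N -> L p = Lb N p.
Proof. by move=> h; apply: Lb_wid. Qed.

Lemma LbD N (p q : {poly rat}) : Lb N (p + q) = Lb N p + Lb N q.
Proof. by rewrite /Lb -big_split; apply: eq_bigr => j _; rewrite coefD rmorphD mulrDl. Qed.

Lemma LbZ N c (p : {poly rat}) : Lb N (c *: p) = ratr c * Lb N p.
Proof. rewrite /Lb big_distrr /=; apply: eq_bigr => j _; rewrite coefZ rmorphM mulrA; reflexivity. Qed.

Lemma LD (p q : {poly rat}) : L (p + q) = L p + L q.
Proof.
rewrite (@L_Lb (p + q) (maxn (size p) (size q))) ?size_polyD // LbD.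
by rewrite -!L_Lb // ?leq_maxl ?leq_maxr.
Qed.

Lemma LZ c (p : {poly rat}) : L (c *: p) = ratr c * L p.
Proof. by rewrite (@L_Lb _ (size p)) ?size_scale_leq // LbZ. Qed.

Lemma L0 : L 0 = 0.
Proof. by rewrite /L /Lb size_poly0 big_ord0. Qed.

Lemma LN (p : {poly rat}) : L (- p) = - L p.
Proof. by rewrite -scaleN1r LZ rmorphN1 mulN1r. Qed.

Lemma LB (p q : {poly rat}) : L (p - q) = L p - L q.
Proof. by rewrite LD LN. Qed.

Lemma L_sum n (F : 'I_n -> {poly rat}) : L (\sum_(i < n) F i) = \sum_(i < n) L (F i).
Proof.
elim: n F => [|n IH] F; first by rewrite !big_ord0 L0.
by rewrite !big_ord_recr LD IH.
Qed.

Lemma LXn k : L 'X^k = gamma k.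
Proof.
rewrite /L /Lb size_polyXn big_ord_recr /= big1 ?add0r.
  by rewrite coefXn eqxx rmorph1 mul1r.
by move=> j _; rewrite coefXn ltn_eqF //= rmorph0 mul0r.
Qed.

Lemma L_Xu j : L ('X * uX ^+ j) =
  \sum_(k < j.+1) (-1) ^+ k * ('C(j, k))%:R * gamma (j.+1 + k)%N.
Proof.
have -> : 'X * uX ^+ j = 'X^(j.+1) * (1 + (- 'X)) ^+ j.
  have -> : uX = 'X * (1 + (- 'X)) by rewrite /uX; ring.
  by rewrite exprMn mulrA -exprS.
rewrite exprDn mulr_sumr L_sum; apply: eq_bigr => k _.
have -> : 'X^(j.+1) * (1 ^+ (j - k) * (- 'X) ^+ k *+ 'C(j, k)) =
    ((-1) ^+ k * ('C(j, k))%:R) *: 'X^(j.+1 + k) :> {poly rat}.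
  rewrite -mul_polyC polyCM polyC_exp polyCN polyC1 polyC_natr exprD exprNn expr1n.
  ring.
by rewrite LZ LXn rmorphM rmorphXn rmorphN1 rmorph_nat.
Qed.

Lemma L_sympl_comp : symplectic gamma -> forall q, L ('X * (q \Po uX)) = 0.
Proof.
move=> hs q; rewrite comp_polyE mulr_sumr L_sum big1 // => i _.
rewrite -scalerAr LZ L_Xu.
have := hs i.+1 isT; rewrite /= => ->; by rewrite mulr0.
Qed.

End LSec.

Lemma sum_even (C : nmodType) (f : nat -> C) n : (forall j, odd j -> f j = 0) ->
  \sum_(j < (2 * n).+1) f j = \sum_(i < n.+1) f (2 * i)%N.
Proof.
move=> hf; elim: n => [|n IH]; first by rewrite !big_ord1.
have -> : (2 * n.+1).+1 = ((2 * n).+1).+2 by lia.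
rewrite big_ord_recr big_ord_recr [in RHS]big_ord_recr /= IH hf /=; last by rewrite /= oddM.
by rewrite addr0 mulnS.
Qed.

Lemma small_size (p : {poly rat}) j : (size p <= j.+1)%N -> p`_j = 0 -> (size p <= j)%N.
Proof.
rewrite leq_eqVlt => /orP[/eqP hs hj|]; last by rewrite ltnS.
have : lead_coef p == 0 by rewrite lead_coefE hs /= hj.
by rewrite lead_coef_eq0 => /eqP hp; move: hs; rewrite hp size_poly0.
Qed.

Lemma XQ_odd n j : odd j -> ('X * ('X^(2 * n) - E (2 * n)))`_j = 0.
Proof.
move=> hj; rewrite {1}(odd_comp (Q_odd n)).
set A := odd_poly _ \Po _.
have -> : 'X * (A * 'X) = A * 'X^2 by rewrite expr2; ring.
rewrite coefMXn; case: ifP => // /negbT; rewrite -leqNgt => h2.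
rewrite coef_comp_poly_Xn // dvdn2 oddB // hj /=; reflexivity.
Qed.

Section Main.
Variable R : realType.
Variable gamma : nat -> R[i].
Local Notation L := (L gamma).

Lemma LXQ n : L ('X * ('X^(2 * n) - E (2 * n))) =
  \sum_(i < n.+1) ratr (ebrack n i) * gamma (2 * i)%N.
Proof.
have hs : (size ('X * ('X^(2 * n) - E (2 * n)))%R <= (2 * n).+1)%N.
  by rewrite (leq_trans (size_polyMleq _ _)) // size_polyX add2n; exact: (sizeQ (2 * n)).
rewrite (L_Lb gamma hs) /Lb (@sum_even _ (fun j => ratr ('X * ('X^(2 * n) - E (2 * n)))`_j * gamma j) n) //.
by move=> j hj; rewrite XQ_odd // rmorph0 mul0r.
Qed.

Lemma LX_split n : gamma (2 * n).+1 =
  L ('X * ('X^(2 * n) - E (2 * n))) + L ('X * E (2 * n)).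
Proof. by rewrite -LD -mulrDr subrK -exprS LXn. Qed.

Lemma fwd : symplectic gamma -> forall n,
  gamma (2 * n).+1 = \sum_(i < n.+1) ratr (ebrack n i) * gamma (2 * i)%N.
Proof.
move=> hs n; rewrite LX_split LXQ.
have [f [hE _]] := E_u n.
by rewrite hE L_sympl_comp // addr0.
Qed.

Lemma bwd : (forall n,
  gamma (2 * n).+1 = \sum_(i < n.+1) ratr (ebrack n i) * gamma (2 * i)%N) ->
  symplectic gamma.
Proof.
move=> hF.
have hLE : forall n, L ('X * E (2 * n)) = 0.
  move=> n; have := LX_split n; rewrite hF LXQ => h.
  by apply: (@addrI _ (\sum_(i < n.+1) ratr (ebrack n i) * gamma (2 * i)%N)); rewrite addr0 -h.
have hq : forall j (q : {poly rat}), (size q <= j)%N -> L ('X * (q \Po uX)) = 0.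
  elim=> [|j IH] q hq.
    by move: hq; rewrite leqn0 size_poly_eq0 => /eqP ->; rewrite comp_poly0 mulr0 L0.
  have [f [hE hf]] := E_u j.
  have hfj : f`_j != 0.
    have : f != 0 by rewrite -size_poly_eq0 hf.
    by rewrite -lead_coef_eq0 lead_coefE hf.
  set a := q`_j / f`_j.
  have hq' : (size (q - a *: f)%R <= j)%N.
    apply: small_size.
      rewrite (leq_trans (size_polyD _ _)) // size_polyN geq_max hq.
      by rewrite (leq_trans (size_scale_leq _ _)) // hf.
    by rewrite coefB coefZ /a mulfVK // subrr.
  have -> : q = (q - a *: f) + a *: f by rewrite subrK.
  rewrite comp_polyD comp_polyZ -hE mulrDr LD IH // -scalerAr LZ hLE mulr0.
  by rewrite addr0.
move=> m hm.
have := hq m ('X^(m.-1)); rewrite size_polyXn prednK // => /(_ (leqnn _)).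
by rewrite comp_Xn_poly L_Xu prednK.
Qed.

End Main.

From Stdlib Require Import FunctionalExtensionality.

Lemma half_odd_eq k : odd k -> k = (2 * k./2).+1.
Proof. by move=> hk; rewrite -{1}(odd_double_half k) hk mul2n add1n. Qed.

Lemma half_even_eq k : ~~ odd k -> k = (2 * k./2)%N.
Proof. by move=> hk; rewrite -{1}(odd_double_half k) (negbTE hk) mul2n add0n. Qed.

Unset Implicit Arguments.
Theorem theorem5p1 (R : realType) :
  (forall gamma : nat -> R[i],
      symplectic gamma <->
      (forall n : nat,
          gamma (2 * n).+1 = \sum_(i < n.+1) ratr (ebrack n i) * gamma (2 * i)%N))
  /\
  (forall a : nat -> R[i],
      exists! gamma : nat -> R[i],
        symplectic gamma /\ (forall n : nat, gamma (2 * n)%N = a n)).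
Proof.
have part1 : forall gamma : nat -> R[i], symplectic gamma <->
      (forall n : nat,
          gamma (2 * n).+1 = \sum_(i < n.+1) ratr (ebrack n i) * gamma (2 * i)%N).
  by move=> g; split; [exact: fwd | exact: bwd].
split => // a.
have hodd : forall h : nat -> R[i], symplectic h -> (forall n, h (2 * n)%N = a n) ->
    forall n, h (2 * n).+1 = \sum_(i < n.+1) ratr (ebrack n i) * a i.
  move=> h hs he n; rewrite fwd //; apply: eq_bigr => i _; by rewrite he.
set g := fun k => if odd k then \sum_(i < (k./2).+1) ratr (ebrack k./2 i) * a i
                  else a k./2.
have hev : forall n, g (2 * n)%N = a n.
  by move=> n; rewrite /g mul2n odd_double doubleK.
have hgo : forall n, g (2 * n).+1 = \sum_(i < n.+1) ratr (ebrack n i) * a i.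
  by move=> n; rewrite /g /= mul2n odd_double /= uphalf_double.
have hgs : symplectic g.
  apply/part1 => n; rewrite hgo; apply: eq_bigr => i _; by rewrite hev.
exists g; split; first by split.
move=> g' [hs' he']; apply: functional_extensionality => k.
case: (boolP (odd k)) => hk.
  by rewrite (half_odd_eq hk) hgo hodd.
by rewrite (half_even_eq hk) hev he'.
Qed.
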